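(* Let $N\ge 3$ be an integer, let $\Delta\theta^*=2\pi/N$, and let $P\neq 0$ be a real constant. Let $(\theta_k)_{k\ge1}$ and $(\omega_k)_{k\ge1}$ be real sequences with $\omega_k>0$ for all $k$, satisfying for every $k\ge 1$ $$\theta_{k+1}=\theta_k+\Delta\theta^*,\qquad \omega_{k+1}-\omega_k=P\sin\theta_k\left[\frac{1}{\omega_k}+\frac{1}{\omega_{k+1}}\right],$$ and the assumption $\omega_k^2>|P|$ for every $k\ge1$. If there exists an index $k_0$ with $\theta_{k_0} \bmod 2\pi\in\{0,\Delta\theta^*/2\}$, then the solution is periodic with period $N$: for every $k\ge k_0$ (indeed for every $k\ge1$), $\theta_{k+N}\equiv\theta_k \pmod{2\pi}$ and $\omega_{k+N}=\omega_k$.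
   Context: This is the ''discrete zero dynamics'' of a devil-stick with parameter $\phi=\pm\pi/2$; in the paper $P=\pm\frac{g(\Delta\theta^* )^2}{2R\sin(\Delta\theta^* )}$ (sign $+$ for $\phi=-\pi/2$, $-$ for $\phi=\pi/2$) with constants $g,R>0$. The hypothesis $\omega_k^2>|P|$ for all $k$ is the paper's Assumption 1. *)

(* Defs.v *)
From Stdlib Require Import Reals.
Open Scope R_scope.

Definition cong2pi (x y : R) : Prop := exists m : Z, x = y + 2 * PI * IZR m.

(* Main.v *)
Require Import Defs.
From Stdlib Require Import Reals Lra Lia Psatz.
Open Scope R_scope.

Lemma step_eq (P c x w y : R) : 0 < x -> 0 < w -> 0 < y ->
  x ^ 2 > Rabs P -> y ^ 2 > Rabs P -> Rabs c <= Rabs P ->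
  w - x = c * (/ x + / w) -> y - w = - c * (/ w + / y) -> x = y.
Proof.
  intros hx hw hy hx2 hy2 hc E1 E2.
  assert (hxy : x * y > Rabs P).
  { destruct (Rle_or_lt (x*y) (Rabs P)) as [h|h]; [|lra].
    assert (0 <= Rabs P) by apply Rabs_pos.
    assert (x*y*(x*y) <= Rabs P * Rabs P) by (apply Rmult_le_compat; nra).
    nra. }
  assert (hcc : c <= Rabs c) by apply RRle_abs.
  assert (H : y - x = c * (/ x - / y)).
  { replace (y - x) with ((w - x) + (y - w)) by ring. rewrite E1, E2. ring. }
  assert (H2 : (y - x) * (x * y) = c * (y - x)).
  { rewrite H at 1. replace (c * (/ x - / y) * (x * y)) with (c * (y * (x * /x) - x * (y * / y))) by ring.
    rewrite !Rinv_r by lra. ring. }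
  assert (H3 : (y - x) * (x * y - c) = 0).
  { replace ((y - x) * (x * y - c)) with ((y - x) * (x * y) - c * (y - x)) by ring. lra. }
  apply Rmult_integral in H3. destruct H3; lra.
Qed.

Section Refl.
Variables (P : R) (s omega : nat -> R) (Ssum : nat).
Hypothesis Hpos : forall k, (1 <= k)%nat -> 0 < omega k.
Hypothesis Hrec : forall k, (1 <= k)%nat ->
  omega (S k) - omega k = P * s k * (/ omega k + / omega (S k)).
Hypothesis Hsq : forall k, (1 <= k)%nat -> omega k ^ 2 > Rabs P.
Hypothesis Hs : forall k, Rabs (s k) <= 1.
Hypothesis HC : forall i j, (1 <= i)%nat -> (1 <= j)%nat -> (i + j + 1 = Ssum)%nat ->
  s j = - s i.

Definition Q (d : nat) := forall i, (1 <= i)%nat -> (2 * i + d = Ssum)%nat ->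
  omega i = omega (i + d)%nat.

Lemma Q_all : forall d, Q d /\ Q (S d).
Proof.
  induction d as [|d [IH1 IH2]].
  - split; intros i hi he.
    + rewrite Nat.add_0_r. reflexivity.
    + assert (hs : s i = - s i) by (apply HC; lia).
      assert (s i = 0) by lra.
      pose proof (Hrec i hi) as R. rewrite H in R.
      replace (i + 1)%nat with (S i) by lia. lra.
  - split; [exact IH2|]. intros i hi he.
    assert (Hw : omega (S i) = omega (S i + d)%nat) by (apply IH1; lia).
    set (j := (S i + d)%nat) in *.
    replace (i + S (S d))%nat with (S j) by (unfold j; lia).
    assert (hsj : s j = - s i) by (apply HC; unfold j; lia).
    apply (step_eq P (P * s i) (omega i) (omega (S i)) (omega (S j)));
      try (apply Hpos; unfold j; lia); try (apply Hsq; unfold j; lia).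
    + rewrite Rabs_mult. pose proof (Hs i). pose proof (Rabs_pos P).
      pose proof (Rabs_pos (s i)). nra.
    + apply Hrec; lia.
    + rewrite Hw. rewrite (Hrec j) by (unfold j; lia). rewrite hsj. ring.
Qed.

Lemma refl_sym : forall i j, (1 <= i)%nat -> (1 <= j)%nat -> (i + j = Ssum)%nat ->
  omega i = omega j.
Proof.
  intros i j hi hj he.
  destruct (Nat.le_gt_cases i j).
  - replace j with (i + (j - i))%nat by lia.
    apply (proj1 (Q_all (j - i))); lia.
  - replace i with (j + (i - j))%nat by lia.
    symmetry. apply (proj1 (Q_all (i - j))); lia.
Qed.
End Refl.

Theorem theorem1 (N : nat) (P : R) (theta omega : nat -> R) :
  (3 <= N)%nat ->
  P <> 0 ->
  (forall k, (1 <= k)%nat -> 0 < omega k) ->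
  (forall k, (1 <= k)%nat -> theta (S k) = theta k + 2 * PI / INR N) ->
  (forall k, (1 <= k)%nat ->
     omega (S k) - omega k = P * sin (theta k) * (/ omega k + / omega (S k))) ->
  (forall k, (1 <= k)%nat -> omega k ^ 2 > Rabs P) ->
  (exists k0, (1 <= k0)%nat /\
     (cong2pi (theta k0) 0 \/ cong2pi (theta k0) ((2 * PI / INR N) / 2))) ->
  forall k, (1 <= k)%nat ->
    cong2pi (theta (k + N)%nat) (theta k) /\ omega (k + N)%nat = omega k.
Proof.
  intros HN HP Hpos Hth Hrec Hsq [k0 [Hk0 Hc]] k Hk.
  assert (HNr : INR N > 0) by (apply lt_0_INR; lia).
  set (d := 2 * PI / INR N) in *.
  assert (HdN : d * INR N = 2 * PI) by (unfold d; field; lra).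
  assert (Hth1 : forall i, (1 <= i)%nat -> theta i = theta 1%nat + (INR i - 1) * d).
  { induction i; intros hi; [lia|]. destruct i.
    - simpl. ring.
    - rewrite Hth by lia. rewrite IHi by lia. rewrite (S_INR (S i)). ring. }
  assert (He : exists (e : nat) (m : Z), (e <= 1)%nat /\
            theta k0 = INR e * d / 2 + 2 * PI * IZR m).
  { destruct Hc as [[m hm]|[m hm]].
    - exists 0%nat, m. split; [lia|]. simpl. lra.
    - exists 1%nat, m. split; [lia|]. simpl. lra. }
  destruct He as [e [m [He Hk0e]]].
  assert (Hsin : forall q i j, (1 <= i)%nat -> (1 <= j)%nat ->
            (i + j + 1 = 2 * k0 - e + q * N + 1)%nat ->
            sin (theta j) = - sin (theta i)).
  { intros q i j hi hj hij.
    assert (hn : (i + j + e = 2 * k0 + q * N)%nat) by lia.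
    apply (f_equal INR) in hn. rewrite !plus_INR, !mult_INR in hn.
    assert (hsum : (theta i + theta j) / 2 = IZR (Z.of_nat q + 2 * m) * PI).
    { rewrite plus_IZR, mult_IZR, <- INR_IZR_INZ.
      rewrite (Hth1 i hi), (Hth1 j hj).
      rewrite (Hth1 k0 Hk0) in Hk0e.
      assert (theta 1%nat = INR e * d / 2 + 2 * PI * IZR m - (INR k0 - 1) * d) by lra.
      rewrite H. simpl in hn.
      assert (INR q * PI * 2 = INR q * (d * INR N)) by (rewrite HdN; ring).
      nra. }
    assert (h0 : sin ((theta i + theta j) / 2) = 0).
    { apply sin_eq_0_1. eauto. }
    pose proof (form3 (theta i) (theta j)) as F. rewrite h0 in F. lra. }
  split.
  - exists 1%Z. rewrite (Hth1 (k + N)%nat) by lia. rewrite (Hth1 k) by lia.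
    rewrite plus_INR. simpl IZR. nra.
  - set (S1 := (2 * k0 - e + (2 * k) * N + 1)%nat).
    assert (hM : (k <= 2 * k * N)%nat) by nia.
    assert (A1 : omega k = omega (S1 - k)%nat).
    { apply (refl_sym P (fun i => sin (theta i)) omega S1); auto.
      all: try (unfold S1; lia).
      - intros; apply Rabs_le; apply SIN_bound.
      - intros i j hi hj hij. apply (Hsin (2 * k)%nat); try assumption; unfold S1 in hij; lia. }
    assert (A2 : omega (k + N)%nat = omega (S1 - k)%nat).
    { apply (refl_sym P (fun i => sin (theta i)) omega (S1 + N)); auto.
      all: try (unfold S1; lia).
      - intros; apply Rabs_le; apply SIN_bound.
      - intros i j hi hj hij. apply (Hsin (2 * k + 1)%nat); try assumption;
        unfold S1 in hij; rewrite Nat.mul_add_distr_r; lia. }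
    congruence.
Qed.
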